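(* Let $\vec w=(w_1,\dots,w_{N})$ be a weight tensor with $N=N_{\vec w}$ elements and initial values $\vec w^{(1)}$, quantized with a static (fixed over iterations) clipping scalar $s$ with $0<s<\max_j|w^{(1)}_j|$. Suppose the weights are trained by gradient-based updates $w_j^{(i+1)}=w_j^{(i)}-\eta_i\,\Delta^{(\mathrm{PWL})}w_j^{(i)}$, where the piece-wise linear (PWL) gradient estimate satisfies $\Delta^{(\mathrm{PWL})}w_j^{(i)}=G_j^{(i)}\cdot\mathbb{1}_{\{|w_j^{(i)}|\le s\}}$ for some upstream gradient values $G_j^{(i)}$. Let $\tilde N^{(i)}_{\vec w}=\#\{j:|w^{(i)}_j|\le s\}$ be the number of parameters learned (receiving a possibly nonzero update) at iteration $i$. Then for every iteration $i$, $$N_{\vec w}>\tilde N^{(i)}_{\vec w}\ge\tilde N^{(i+1)}_{\vec w}.$$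
   Context: The PWL estimator replaces the derivative of the clipped quantizer $\mathbb{Q}(x)=\mathrm{clip}(s\,2^{1-B}\mathrm{round}(x2^{B-1}/s),-s,s)$ by $\mathbb{1}_{\{x\in[-s,s]\}}$, so weights whose magnitude exceeds $s$ receive zero gradient. *)

(* Defs.v *)
From mathcomp Require Import all_boot all_order all_algebra.
Set Implicit Arguments. Unset Strict Implicit. Unset Printing Implicit Defensive.
Import Order.TTheory GRing.Theory Num.Theory.
Local Open Scope ring_scope.

Definition pwl_grad (R : realFieldType) (s w g : R) : R :=
  if `|w| <= s then g else 0.

Definition n_learned (R : realFieldType) (N : nat) (s : R) (w : 'I_N -> R) : nat :=
  #|[set j : 'I_N | `|w j| <= s]|.

(* Main.v *)
Require Import Defs.
From mathcomp Require Import all_boot all_order all_algebra.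
Import Order.TTheory GRing.Theory Num.Theory.
Local Open Scope ring_scope.

Theorem proposition2 (R : realFieldType) (N : nat) (s : R)
    (w : nat -> 'I_N -> R) (eta : nat -> R) (G : nat -> 'I_N -> R) :
  0 < s ->
  (exists j : 'I_N, s < `|w 1%N j|) ->
  (forall (i : nat) (j : 'I_N), (1 <= i)%N ->
      w i.+1 j = w i j - eta i * pwl_grad s (w i j) (G i j)) ->
  forall i : nat, (1 <= i)%N ->
    (n_learned s (w i) < N)%N /\
    (n_learned s (w i.+1) <= n_learned s (w i))%N.
Proof.
move=> s0 [j0 Hj0] Hupd.
have stay : forall i j, (1 <= i)%N -> s < `|w i j| -> w i.+1 j = w i j.
  move=> i j Hi Hs; rewrite Hupd // /pwl_grad.
  by rewrite leNgt Hs /= mulr0 subr0.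
have Hout : forall i, (1 <= i)%N -> s < `|w i j0|.
  elim=> [//|i IH] Hi.
  case: i IH Hi => [_ _ //|i] IH _.
  by rewrite stay // IH.
move=> i Hi; split.
  rewrite /n_learned -[X in (_ < X)%N]card_ord.
  apply: proper_card; apply/properP; split; first exact: subset_predT.
  exists j0 => //; rewrite inE -ltNge; exact: Hout.
rewrite /n_learned; apply: subset_leq_card; apply/subsetP => j.
rewrite !inE => Hj; rewrite leNgt; apply/negP => Hs.
by move: Hj; rewrite stay // leNgt Hs.
Qed.
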